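(* Let $\mathbb{X}$ be a real normed space, $x_1,x_2\in S_{\mathbb{X}}$ and $\epsilon_1,\epsilon_2\in(0,1)$. If $F(x_1,\epsilon_1)=F(x_2,\epsilon_2)$, then $x_1=\pm x_2$ and $\epsilon_1=\epsilon_2$.
   Context: $S_{\mathbb{X}}$ is the unit sphere. For $x,y\in\mathbb{X}$ and $\epsilon\in[0,1)$, $x\perp_D^{\epsilon} y$ means $\|x+\lambda y\|\geq\sqrt{1-\epsilon^2}\,\|x\|$ for all $\lambda\in\mathbb{R}$; $F(x,\epsilon)=\{y\in\mathbb{X}: x\perp_D^{\epsilon}y\}$. *)

(* Defs.v *)
From mathcomp Require Import all_boot all_order all_algebra.
From mathcomp Require Import all_classical all_reals all_analysis.
Set Implicit Arguments. Unset Strict Implicit. Unset Printing Implicit Defensive.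
Import Order.TTheory GRing.Theory Num.Theory.
Import numFieldNormedType.Exports.
Local Open Scope classical_set_scope.
Local Open Scope ring_scope.

(* Approximate Birkhoff-James orthogonality (Dragomir's):
   x _|_D^eps y  iff  ||x + lambda y|| >= sqrt(1 - eps^2) ||x|| for all real lambda. *)
Definition dorth (R : realType) (V : normedModType R) (eps : R) (x y : V) : Prop :=
  forall lambda : R, Num.sqrt (1 - eps ^+ 2) * `|x| <= `|x + lambda *: y|.

Definition Fset (R : realType) (V : normedModType R) (x : V) (eps : R) : set V :=
  [set y | dorth eps x y].

(* Main.v *)
Require Import Defs.
From mathcomp Require Import all_boot all_order all_algebra.
From mathcomp Require Import all_classical all_reals all_analysis.
From mathcomp Require Import ring lra.
Import Order.TTheory GRing.Theory Num.Theory.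
Import numFieldNormedType.Exports.
Local Open Scope classical_set_scope.
Local Open Scope ring_scope.
Set Implicit Arguments. Unset Strict Implicit.

Lemma iterA (R : realType) (N : R -> R -> R) (c1 c2 a0 b0 d : R) :
  (forall s t, 0 <= N s t) -> N 1 0 <= 1 ->
  0 < c1 -> 0 < d -> c1 <= a0 -> 0 < b0 -> b0 < c2 ->
  (forall s t, a0 * s + b0 * t <= N s t) ->
  (forall s t, - d * t <= N s t) ->
  (forall u v, 0 < u -> 0 < v -> (forall s t, c1 * (u * s + v * t) <= u * N s t) ->
      (forall s t, c2 * (u * s + v * t) <= v * N s t)) -> False.
Proof.
move=> N0 N10 c10 d0 ca0 b00 b0c2 Ha0 Hd HF.
have c20 : 0 < c2 by lra.
pose g := c1 * d * (c2 - b0) / ((c2 + d) * b0).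
have g0 : 0 < g.
  rewrite /g; apply: divr_gt0; last by apply: mulr_gt0; lra.
  by apply: mulr_gt0; [apply: mulr_gt0|lra].
have step : forall a, c1 <= a -> (forall s t, a*s + b0*t <= N s t) ->
    exists a', a + g <= a' /\ (forall s t, a'*s + b0*t <= N s t).
  move=> a ca Ha.
  have a0' : 0 < a by lra.
  have H2 := HF a b0 a0' b00.
  have H3 : forall s t, c2 * (a * s + b0 * t) <= b0 * N s t.
    apply: H2 => s t.
    case: (lerP 0 (a*s+b0*t)) => X.
    - apply: (le_trans (y := a * (a*s+b0*t))); first by apply: ler_wpM2r.
      by apply: ler_wpM2l; [lra|apply: Ha].
    - apply: (le_trans (y := 0)); last by apply: mulr_ge0; [lra|apply: N0].
      by rewrite pmulr_rle0 //; lra.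
  pose th := (b0 + d) / (c2 + d).
  have th0 : 0 <= th by apply: divr_ge0; lra.
  have th1 : 1 - th = (c2 - b0) / (c2 + d).
    rewrite /th; field; repeat (apply/andP; split); apply/eqP; lra.
  have th1' : 0 <= 1 - th by rewrite th1; apply: divr_ge0; lra.
  exists (th * (c2 / b0) * a); split.
    have -> : th * (c2 / b0) * a = a + a * (d * (c2 - b0) / ((c2 + d) * b0)).
      rewrite /th; field; repeat (apply/andP; split); apply/eqP; lra.
    rewrite lerD2l /g -!mulrA; apply: ler_wpM2r => //.
    apply: mulr_ge0; first lra.
    by apply: divr_ge0; [lra| apply: mulr_ge0; lra].
  move=> s t.
  have E : th * (c2 / b0) * a * s + b0 * t
      = th * (c2 * (a * s + b0 * t) / b0) + (1 - th) * (- d * t).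
    rewrite th1 /th; field; repeat (apply/andP; split); apply/eqP; lra.
  rewrite E.
  have h1 : c2 * (a * s + b0 * t) / b0 <= N s t.
    by rewrite ler_pdivrMr // [X in _ <= X]mulrC; apply: H3.
  apply: (le_trans (y := th * N s t + (1 - th) * N s t)); last by lra.
  apply: lerD; [exact: ler_wpM2l | apply: ler_wpM2l => //; exact: Hd].
have ind : forall n : nat, exists a, c1 + n%:R * g <= a /\ (forall s t, a*s + b0*t <= N s t).
  elim=> [|n [a [ha Ha]]].
    by exists a0; split => //; rewrite mul0r addr0.
  have ca : c1 <= a.
    apply: le_trans ha; rewrite lerDl; apply: mulr_ge0; [exact: ler0n | lra].
  have [a' [ha' Ha']] := step a ca Ha.
  exists a'; split => //.
  apply: le_trans ha'; rewrite -natr1 mulrDl mul1r addrA; lra.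
have bnd : forall a, (forall s t, a*s + b0*t <= N s t) -> a <= 1.
  move=> a Ha; apply: le_trans N10; have := Ha 1 0; by rewrite mulr1 mulr0 addr0.
have c11 : c1 <= 1 by apply: le_trans ca0 (bnd _ Ha0).
have x0 : 0 <= (1 - c1) / g by apply: divr_ge0; lra.
have gb := archi_boundP x0.
have [a [ha Ha]] := ind (Num.bound ((1 - c1) / g)).
have := bnd a Ha.
have : 1 - c1 < (Num.bound ((1 - c1) / g))%:R * g.
  by rewrite -ltr_pdivrMr.
lra.
Qed.

Lemma coreA (R : realType) (N : R -> R -> R) (c1 c2 be d d' : R) :
  (forall s t, 0 <= N s t) -> N 1 0 <= 1 -> N 0 1 <= 1 ->
  0 < c1 -> c1 < 1 -> 0 < c2 -> c2 < 1 -> 0 <= be -> 0 < d -> 0 < d' ->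
  (forall s t, s + be * t <= N s t) ->
  (forall s t, d * `|t| <= N s t) ->
  (forall s t, d' * `|s| <= N s t) ->
  (forall u v, 0 < u -> 0 < v -> (forall s t, c1 * (u * s + v * t) <= u * N s t) ->
      (forall s t, c2 * (u * s + v * t) <= v * N s t)) ->
  (forall u v, 0 < u -> 0 < v -> (forall s t, c2 * (u * s + v * t) <= v * N s t) ->
      (forall s t, c1 * (u * s + v * t) <= u * N s t)) -> False.
Proof.
move=> N0 N10 N01 c10 c11 c20 c21 be0 d0 d'0 Hb Hd Hd' HF1 HF2.
have Hq : forall s t, - d * t <= N s t.
  move=> s t; apply: le_trans (Hd s t).
  rewrite mulNr -mulrN; apply: ler_wpM2l; first lra.
  by rewrite -normrN ler_norm.
case: (ltrP (c1 * be) c2) => hcb.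
-
  have [de [de0 [ded [dee Hde]]]] : exists de, 0 < de /\ de <= d /\ c1 * be + de <= c2
       /\ forall s t, de * t <= N s t.
    have Hg : forall de, 0 <= de -> de <= d -> forall s t, de * t <= N s t.
      move=> de de0 ded s t; apply: le_trans (Hd s t).
      apply: (le_trans (y := de * `|t|)); first by apply: ler_wpM2l => //; exact: ler_norm.
      by apply: ler_wpM2r => //; exact: normr_ge0.
    case: (lerP d (c2 - c1 * be)) => hd.
      by exists d; split => //; split => //; split; [lra | apply: Hg; lra].
    exists (c2 - c1 * be); split; first lra.
    by split; first lra; split; [lra | apply: Hg; lra].
  pose b0 := c1 * be + (1 - c1) * de.
  have b00 : 0 < b0.
    rewrite /b0; apply: ltr_wpDl; first by apply: mulr_ge0; lra.
    by apply: mulr_gt0; lra.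
  have b0c : b0 < c2.
    rewrite /b0; have : (1 - c1) * de < de.
      by rewrite mulrBl mul1r ltrBlDr ltrDl; apply: mulr_gt0.
    lra.
  apply: (@iterA R N c1 c2 c1 b0 d) => //.
  move=> s t.
  have -> : c1 * s + b0 * t = c1 * (s + be * t) + (1 - c1) * (de * t).
    by rewrite /b0; ring.
  apply: (le_trans (y := c1 * N s t + (1 - c1) * N s t)); last lra.
  by apply: lerD; apply: ler_wpM2l; try lra; [apply: Hb | apply: Hde].
-
  have be_pos : 0 < be.
    rewrite lt0r; apply/andP; split => //; apply/eqP => be_eq.
    by move: hcb; rewrite be_eq mulr0; lra.
  pose th := c2 / be.
  have th0 : 0 < th by apply: divr_gt0.
  have thc : th <= c1 by rewrite /th ler_pdivrMr.
  have [de [de0 [ded [dee Hde]]]] : exists de, 0 < de /\ de <= d' /\ de <= th / 2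
       /\ forall s t, - de * s <= N s t.
    have Hg : forall de, 0 <= de -> de <= d' -> forall s t, - de * s <= N s t.
      move=> de de0 ded s t; apply: le_trans (Hd' s t).
      apply: (le_trans (y := de * `|s|)).
        by rewrite mulNr -mulrN; apply: ler_wpM2l => //; rewrite -normrN ler_norm.
      by apply: ler_wpM2r => //; exact: normr_ge0.
    case: (lerP d' (th / 2)) => hd.
      by exists d'; split => //; split => //; split; [lra | apply: Hg; lra].
    exists (th / 2); split; first lra.
    by split; first lra; split; [lra | apply: Hg; lra].
  pose a0 := th - (1 - th) * de.
  have a00 : 0 < a0.
    rewrite /a0; have : (1 - th) * de <= de.
      by rewrite mulrBl mul1r lerBlDr lerDl; apply: mulr_ge0; lra.
    lra.
  have a0c : a0 < c1.
    rewrite /a0; have : 0 < (1 - th) * de by apply: mulr_gt0; lra.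
    lra.
  have Hst : forall s t, a0 * s + c2 * t <= N s t.
    move=> s t.
    have -> : a0 * s + c2 * t = th * (s + be * t) + (1 - th) * (- de * s).
      rewrite /a0 /th; field; apply/eqP; lra.
    apply: (le_trans (y := th * N s t + (1 - th) * N s t)); last lra.
    by apply: lerD; apply: ler_wpM2l; try lra; [apply: Hb | apply: Hde].
  apply: (@iterA R (fun s t => N t s) c2 c1 c2 a0 d') => //.
  + by move=> s t; rewrite addrC; apply: Hst.
  + move=> s t; apply: le_trans (Hd' t s).
    rewrite mulNr -mulrN; apply: ler_wpM2l; first lra.
    by rewrite -normrN ler_norm.
  + move=> u v u0 v0 H s t.
    have H' : forall s t, c2 * (v * s + u * t) <= u * N s t.
      by move=> s' t'; rewrite addrC; apply: H.
    by rewrite addrC; apply: (HF2 v u v0 u0 H').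
Qed.

Lemma iterB (R : realType) (N : R -> R -> R) (c1 c2 be d : R) :
  (forall s t, 0 <= N s t) ->
  0 < c1 -> c1 < c2 -> c2 <= 1 -> 0 < d ->
  (forall s t, s + be * t <= N s t) ->
  (forall s t, d * `|t| <= N s t) ->
  (forall r, (forall s t, c1 * s + c1 * r * t <= N s t) ->
             (forall s t, c2 * s + c2 * r * t <= N s t)) -> False.
Proof.
move=> N0 c10 c12 c21 d0 Hb Hd HF.
have c20 : 0 < c2 by lra.
pose h := (1 - c1 / c2) * d / c1.
have h0 : 0 < h.
  rewrite /h; apply: divr_gt0 => //; apply: mulr_gt0 => //.
  by rewrite subr_gt0 ltr_pdivrMr // mul1r.
have start : forall s t, c2 * s + c2 * be * t <= N s t.
  move=> s t; apply: (le_trans (y := c2 * N s t)).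
    by rewrite -mulrA -mulrDr; apply: ler_wpM2l; [lra|apply: Hb].
  by rewrite ler_piMl //; apply: N0.
pose th := c1 / c2.
have th0 : 0 <= th by apply: divr_ge0; lra.
have th1 : 0 <= 1 - th by rewrite subr_ge0 /th ler_pdivrMr // mul1r; lra.
have step : forall r, (forall s t, c2 * s + c2 * r * t <= N s t) ->
   (forall s t, c2 * s + c2 * (r + h) * t <= N s t).
  move=> r Hr; apply: HF => s t.
  have E : c1 * s + c1 * (r + h) * t = th * (c2 * s + c2 * r * t) + (1 - th) * (d * t).
    rewrite /th /h; field; repeat (apply/andP; split); apply/eqP; lra.
  rewrite E.
  apply: (le_trans (y := th * N s t + (1 - th) * N s t)); last by lra.
  apply: lerD; apply: ler_wpM2l => //.
  apply: le_trans (Hd s t); apply: ler_wpM2l; [lra| exact: ler_norm].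
have ind : forall n : nat, forall s t, c2 * s + c2 * (be + n%:R * h) * t <= N s t.
  elim=> [|n IH]; first by rewrite mul0r addr0.
  have := step _ IH; by rewrite -natr1 mulrDl mul1r addrA.
pose K := N 0 1.
have x0 : 0 <= `|K / c2 - be| / h by apply: divr_ge0; [exact: normr_ge0 | lra].
have gb := archi_boundP x0.
have := ind (Num.bound (`|K / c2 - be| / h)) 0 1.
rewrite mulr0 add0r mulr1 -/K.
have : `|K / c2 - be| < (Num.bound (`|K / c2 - be| / h))%:R * h.
  by rewrite -ltr_pdivrMr.
have := ler_norm (K / c2 - be).
set n := (Num.bound _)%:R.
move=> h1 h2 h3.
have : K / c2 < be + n * h by lra.
rewrite ltr_pdivrMr // mulrC; lra.
Qed.

Lemma transl (R : realType) (V : normedModType R) (x z : V) (c u v : R) :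
  0 <= c -> 0 < u ->
  (forall l : R, c <= `|x + l *: (v *: x - u *: z)|) <->
  (forall s t, c * (u * s + v * t) <= u * `|s *: x + t *: z|).
Proof.
move=> c0 u0; split.
- move=> H s t.
  have [X0|X0] := eqVneq (u * s + v * t) 0.
    by rewrite X0 mulr0; apply: mulr_ge0; [lra | exact: normr_ge0].
  have E : x + (- t / (u * s + v * t)) *: (v *: x - u *: z)
         = (u / (u * s + v * t)) *: (s *: x + t *: z).
    rewrite scalerBr !scalerA scalerDr !scalerA addrA -{1}(scale1r x) -scalerDl -scaleNr.
    congr (_ *: _ + _ *: _); field => //.
  have := H (- t / (u * s + v * t)); rewrite E normrZ normrM (gtr0_norm u0) normfV.
  rewrite -mulrA mulrCA ler_pdivlMl ?normr_gt0 // => h.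
  have h2 : c * (u * s + v * t) <= c * `|u * s + v * t| by apply: ler_wpM2l => //; exact: ler_norm.
  by apply: le_trans h2 _; rewrite mulrC.
- move=> H l.
  have := H (1 + l * v) (- (l * u)).
  have -> : u * (1 + l * v) + v * - (l * u) = u by ring.
  have -> : (1 + l * v) *: x + - (l * u) *: z = x + l *: (v *: x - u *: z).
    by rewrite scalerDl scale1r scalerBr !scalerA scaleNr addrA.
  by rewrite mulrC ler_pM2l.
Qed.

Lemma subgrad (R : realType) (V : normedModType R) (x z : V) : `|x| = 1 ->
  exists be : R, forall s t : R, s + be * t <= `|s *: x + t *: z|.
Proof.
move=> x1.
pose f (tau : R) := `|x + tau *: z|.
pose S := [set q : R | exists2 tau, tau < 0 & q = (f tau - 1) / tau].
have three : forall t1 t2, t1 < 0 -> 0 < t2 -> (f t1 - 1) / t1 <= (f t2 - 1) / t2.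
  move=> t1 t2 h1 h2.
  have key : t2 - t1 <= t2 * f t1 - t1 * f t2.
    have E : (t2 - t1) *: x = t2 *: (x + t1 *: z) - t1 *: (x + t2 *: z).
      by rewrite !scalerDr !scalerA scalerBl opprD addrACA mulrC subrr addr0.
    have := ler_normB (t2 *: (x + t1 *: z)) (t1 *: (x + t2 *: z)).
    rewrite -E !normrZ x1 mulr1 (gtr0_norm h2) (ltr0_norm h1) (gtr0_norm); last lra.
    by rewrite /f mulNr.
  set q1 := (f t1 - 1) / t1; set q2 := (f t2 - 1) / t2.
  have e1 : f t1 = 1 + q1 * t1 by rewrite /q1 divfK ?lt_eqF // addrC subrK.
  have e2 : f t2 = 1 + q2 * t2 by rewrite /q2 divfK ?gt_eqF // addrC subrK.
  rewrite e1 e2 in key.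
  have : 0 <= (t1 * t2) * (q1 - q2) by move: key; nra.
  rewrite nmulr_rge0; last by rewrite pmulr_llt0.
  lra.
have Sne : S ((f (-1) - 1) / (-1)) by exists (-1) => //; lra.
have Sub : ubound S ((f 1 - 1) / 1).
  by move=> q [tau tau0 ->]; apply: three => //; lra.
have hs : has_ubound S by exists ((f 1 - 1) / 1).
pose be := sup S.
have lo : forall tau, tau < 0 -> (f tau - 1) / tau <= be.
  by move=> tau h; apply: ub_le_sup => //; exists tau.
have hi : forall tau, 0 < tau -> be <= (f tau - 1) / tau.
  move=> tau h; apply: ge_sup; first by exists ((f (-1) - 1) / (-1)).
  by move=> q [t1 t10 ->]; apply: three.
have sub : forall tau, 1 + be * tau <= f tau.
  move=> tau; case: (ltgtP tau 0) => h.
  - by have := lo tau h; rewrite ler_ndivrMr //; lra.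
  - by have := hi tau h; rewrite ler_pdivlMr //; lra.
  - by rewrite h /f scale0r addr0 x1 mulr0 addr0.
have beub : be <= `|z|.
  apply: le_trans (hi 1 ltr01) _; rewrite divr1 /f lerBlDl.
  by apply: le_trans (ler_normD _ _) _; rewrite scale1r x1.
have belb : - `|z| <= be.
  apply: le_trans (lo (-1) _); last lra.
  rewrite ler_ndivlMr; last lra.
  rewrite /f; have := ler_normD x ((-1) *: z); rewrite x1 normrZ normrN normr1 mul1r.
  move=> h; lra.
exists be => s t.
case: (ltrP 0 s) => hs0.
- have -> : s *: x + t *: z = s *: (x + (t / s) *: z).
    by rewrite scalerDr scalerA mulrC divfK // gt_eqF.
  rewrite normrZ (gtr0_norm hs0).
  have := sub (t / s); rewrite -/(f _) => h.
  have -> : s + be * t = s * (1 + be * (t / s)).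
    by field; rewrite gt_eqF.
  by apply: ler_wpM2l => //; lra.
- have h1 := lerB_normD (t *: z) (s *: x).
  rewrite [t *: z + _]addrC !normrZ x1 mulr1 (ler0_norm hs0) in h1.
  have h2 : be * t <= `|z| * `|t|.
    apply: le_trans (ler_norm _) _; rewrite normrM.
    apply: ler_wpM2r; first exact: normr_ge0.
    by rewrite ler_norml; apply/andP; split; lra.
  rewrite [`|z| * _]mulrC in h2. lra.
Qed.

Lemma posit (R : realType) (V : normedModType R) (x z : V) : `|x| = 1 ->
  (forall a : R, z != a *: x) ->
  exists2 d : R, 0 < d & forall s t : R, d * `|t| <= `|s *: x + t *: z|.
Proof.
move=> x1 hz.
pose g (r : R) := `|z + r *: x|.
have gc : continuous g.
  move=> r; apply: (@continuous_comp _ _ _ (fun r : R => z + r *: x) Num.norm).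
    apply: continuousD; first exact: cvg_cst.
    exact: scalel_continuous.
  exact: norm_continuous.
have M0 : - (2 * `|z|) <= 2 * `|z| by have := normr_ge0 z; lra.
have [r0 r0M r0min] := EVT_min M0 (continuous_subspaceT gc).
have gmin : forall r, g r0 <= g r.
  move=> r; case: (lerP `|r| (2 * `|z|)) => hr.
    by apply: r0min; rewrite in_itv /= -ler_norml.
  apply: (le_trans (r0min 0 _)); first by rewrite in_itv /=; apply/andP; split; lra.
  rewrite /g scale0r addr0.
  have := lerB_normD (r *: x) z; rewrite normrZ x1 mulr1 [r *: x + z]addrC; lra.
exists (g r0).
  rewrite /g normr_gt0; apply/negP => /eqP h.
  by move/negP: (hz (- r0)); apply; rewrite scaleNr -subr_eq0 opprK h.
move=> s t.
have [->|t0] := eqVneq t 0.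
  by rewrite normr0 mulr0; exact: normr_ge0.
have -> : s *: x + t *: z = t *: (z + (s / t) *: x).
  by rewrite scalerDr scalerA mulrC divfK // addrC.
rewrite normrZ mulrC; apply: ler_wpM2l; first exact: normr_ge0.
exact: gmin.
Qed.

Lemma Fset_mem (R : realType) (V : normedModType R) (x : V) (e : R) (y : V) :
  `|x| = 1 -> Fset x e y <-> (forall l : R, Num.sqrt (1 - e ^+ 2) <= `|x + l *: y|).
Proof. by move=> x1; rewrite /Fset /dorth /= x1 mulr1. Qed.

Lemma FsetN (R : realType) (V : normedModType R) (x : V) (e : R) :
  Fset (- x) e = Fset x e.
Proof.
rewrite /Fset /dorth; apply/seteqP; split => y /= H l.
- by have := H (- l); rewrite scaleNr -opprD !normrN.
- have E : - x + l *: y = - (x + (- l) *: y) by rewrite opprD scaleNr opprK.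
  by rewrite E !normrN; apply: H.
Qed.

Lemma cfacts (R : realType) (e : R) : 0 < e < 1 ->
  0 < Num.sqrt (1 - e ^+ 2) /\ Num.sqrt (1 - e ^+ 2) < 1.
Proof.
move=> /andP [e0 e1].
have h : 0 < 1 - e ^+ 2 by rewrite expr2; nra.
have h2 := sqr_sqrtr (ltW h).
have c0 : 0 < Num.sqrt (1 - e ^+ 2) by rewrite sqrtr_gt0.
split => //.
move: h2; set c := Num.sqrt _; rewrite !expr2 => h2; nra.
Qed.

Lemma hFtrans (R : realType) (V : normedModType R) (x1 x2 : V) (e1 e2 : R) :
  `|x1| = 1 -> `|x2| = 1 -> 0 < e2 < 1 -> Fset x1 e1 = Fset x2 e2 ->
  forall u v : R, 0 < u -> 0 < v ->
  (forall s t, Num.sqrt (1 - e1 ^+ 2) * (u * s + v * t) <= u * `|s *: x1 + t *: x2|) ->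
  (forall s t, Num.sqrt (1 - e2 ^+ 2) * (u * s + v * t) <= v * `|s *: x1 + t *: x2|).
Proof.
move=> x11 x21 he2 hF u v u0 v0 H.
have [c20 _] := cfacts he2.
have c10 : 0 <= Num.sqrt (1 - e1 ^+ 2) by exact: sqrtr_ge0.
have /(transl x1 x2 v c10 u0) H1 := H.
have H2 : Fset x2 e2 (v *: x1 - u *: x2).
  by rewrite -hF; apply/Fset_mem.
have /(Fset_mem _ _ x21) H3 := H2.
have H4 : forall l : R, Num.sqrt (1 - e2 ^+ 2) <= `|x2 + l *: (u *: x2 - v *: x1)|.
  move=> l; have := H3 (- l).
  by rewrite scaleNr -scalerN opprB.
have /(transl x2 x1 u (ltW c20) v0) H5 := H4.
move=> s t; have := H5 t s.
by rewrite [v * t + _]addrC [t *: x2 + _]addrC.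
Qed.

Lemma caseA_pos (R : realType) (V : normedModType R) (x1 x2 : V) (e1 e2 be : R) :
  `|x1| = 1 -> `|x2| = 1 -> 0 < e1 < 1 -> 0 < e2 < 1 ->
  (forall a : R, x2 != a *: x1) -> (forall a : R, x1 != a *: x2) ->
  Fset x1 e1 = Fset x2 e2 -> 0 <= be ->
  (forall s t, s + be * t <= `|s *: x1 + t *: x2|) -> False.
Proof.
move=> x11 x21 he1 he2 hz hz' hF be0 Hb.
have [c10 c11] := cfacts he1.
have [c20 c21] := cfacts he2.
have [d d0 Hd] := posit x11 hz.
have [d' d'0 Hd'] := posit x21 hz'.
apply: (@coreA R (fun s t => `|s *: x1 + t *: x2|) (Num.sqrt (1 - e1 ^+ 2))
          (Num.sqrt (1 - e2 ^+ 2)) be d d') => //.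
- by rewrite scale1r scale0r addr0 x11.
- by rewrite scale1r scale0r add0r x21.
- by move=> s t; rewrite addrC; apply: Hd'.
- exact: hFtrans.
- move=> u v u0 v0 H s t.
  have hF' : Fset x2 e2 = Fset x1 e1 by rewrite hF.
  have H' : forall s t, Num.sqrt (1 - e2 ^+ 2) * (v * s + u * t) <= v * `|s *: x2 + t *: x1|.
    by move=> s' t'; rewrite [v * s' + _]addrC [s' *: x2 + _]addrC; apply: H.
  have := hFtrans x21 x11 he1 hF' v0 u0 H' t s.
  by rewrite [v * t + _]addrC [t *: x2 + _]addrC.
Qed.

Lemma caseA (R : realType) (V : normedModType R) (x1 x2 : V) (e1 e2 : R) :
  `|x1| = 1 -> `|x2| = 1 -> 0 < e1 < 1 -> 0 < e2 < 1 ->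
  (forall a : R, x2 != a *: x1) ->
  Fset x1 e1 = Fset x2 e2 -> False.
Proof.
move=> x11 x21 he1 he2 hz hF.
have hz' : forall a : R, x1 != a *: x2.
  move=> a; apply/eqP => h.
  have a0 : a != 0.
    by apply/eqP => a0; move: x11; rewrite h a0 scale0r normr0; lra.
  by move/eqP: (hz a^-1); apply; rewrite h scalerA mulVf // scale1r.
have [be Hb] := subgrad x2 x11.
case: (lerP 0 be) => hbe.
  exact: (caseA_pos x11 x21 he1 he2 hz hz' hF hbe Hb).
apply: (@caseA_pos R V x1 (- x2) e1 e2 (- be)) => //.
- by rewrite normrN.
- by move=> a; apply/eqP => h; move/eqP: (hz (- a)); apply; rewrite scaleNr -h opprK.
- by move=> a; rewrite scalerN -scaleNr; apply: hz'.
- by rewrite FsetN.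
- by lra.
- by move=> s t; rewrite scalerN -scaleNr mulNr -mulrN; apply: Hb.
Qed.

Lemma caseB_lt (R : realType) (V : normedModType R) (x1 y : V) (e1 e2 : R) :
  `|x1| = 1 -> 0 < e1 < 1 -> 0 < e2 < 1 -> (forall a : R, y != a *: x1) ->
  Num.sqrt (1 - e1 ^+ 2) < Num.sqrt (1 - e2 ^+ 2) ->
  Fset x1 e1 = Fset x1 e2 -> False.
Proof.
move=> x11 he1 he2 hy hlt hF.
have [c10 c11] := cfacts he1.
have [c20 c21] := cfacts he2.
have [be Hb] := subgrad y x11.
have [d d0 Hd] := posit x11 hy.
apply: (@iterB R (fun s t => `|s *: x1 + t *: y|) (Num.sqrt (1 - e1 ^+ 2))
          (Num.sqrt (1 - e2 ^+ 2)) be d) => //.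
- by lra.
- move=> r H.
  have E : forall c s t : R, c * s + c * r * t = c * (1 * s + r * t) by move=> *; ring.
  have H1 : forall s t, Num.sqrt (1 - e1 ^+ 2) * (1 * s + r * t) <= 1 * `|s *: x1 + t *: y|.
    by move=> s t; rewrite -E mul1r; apply: H.
  move/(transl x1 y r (ltW c10) ltr01): H1 => H1.
  have H2 : Fset x1 e2 (r *: x1 - 1 *: y) by rewrite -hF; apply/Fset_mem.
  move/(Fset_mem _ _ x11): H2 => H2.
  move/(transl x1 y r (ltW c20) ltr01): H2 => H2.
  by move=> s t; rewrite E -[X in _ <= X]mul1r; apply: H2.
Qed.

Theorem theorem2p6 (R : realType) (V : normedModType R) (x1 x2 : V) (e1 e2 : R)
  (hdim : exists y : V, forall a : R, y != a *: x1)
  (hx1 : `|x1| = 1) (hx2 : `|x2| = 1)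
  (he1 : 0 < e1 < 1) (he2 : 0 < e2 < 1)
  (hF : Fset x1 e1 = Fset x2 e2) :
  (x1 = x2 \/ x1 = - x2) /\ e1 = e2.
Proof.
case: (pselect (exists a : R, x2 = a *: x1)); last first.
  move=> hn; exfalso; apply: (caseA hx1 hx2 he1 he2 _ hF).
  by move=> a; apply/eqP => h; apply: hn; exists a.
move=> [a ha].
have a1 : `|a| = 1 by move: hx2; rewrite ha normrZ hx1 mulr1.
have hxx : x1 = x2 \/ x1 = - x2.
  move: a1; case: (ler0P a) => ha0 a1.
  - right; rewrite ha; have -> : a = -1 by lra.
    by rewrite scaleN1r opprK.
  - left; rewrite ha; have -> : a = 1 by lra.
    by rewrite scale1r.
split => //.
have hF' : Fset x1 e1 = Fset x1 e2.
  by case: hxx => h; rewrite hF h ?FsetN.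
have [y hy] := hdim.
have [c10 c11] := cfacts he1.
have [c20 c21] := cfacts he2.
have hc : Num.sqrt (1 - e1 ^+ 2) = Num.sqrt (1 - e2 ^+ 2).
  case: (ltgtP (Num.sqrt (1 - e1 ^+ 2)) (Num.sqrt (1 - e2 ^+ 2))) => // h.
  - by exfalso; exact: (caseB_lt hx1 he1 he2 hy h hF').
  - by exfalso; exact: (caseB_lt hx1 he2 he1 hy h (esym hF')).
move: he1 he2 => /andP [e10 e11] /andP [e20 e21].
have q1 : 0 <= 1 - e1 ^+ 2 by rewrite expr2; nra.
have q2 : 0 <= 1 - e2 ^+ 2 by rewrite expr2; nra.
have h1 := sqr_sqrtr q1; have h2 := sqr_sqrtr q2.
rewrite hc h2 !expr2 in h1; nra.
Qed.
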